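(* Let $(Q,\infty)$, $\alpha$, $\beta$, $\bar\zeta$, $\mathcal C$, $0\in I$ be as in the context, let $d\ge1$ be an integer with $d\beta_i\le\alpha_i$ for all $i\in I$, let $\zeta\in\mathcal C$, and let $\zeta^\sharp$ and $U$ be as in the context. Then a representation $\rho_\sharp$ of $Q^\sharp$ on $U$ is $\zeta^\sharp$-stable if and only if it is $\bar\zeta$-semistable and every sub-representation $S\subseteq U$ with $\sum_{i\in I}\bar\zeta_i\dim S_i=0$ and $S_{\infty'}=\mathbb C$ equals $U$.
   Context: A framed quiver is a quiver with relations $Q=(Q_0,Q_1,Q_2)$ (arrows $a$ from $\mathrm{out}(a)$ to $\mathrm{in}(a)$; each relation $l\in Q_2$ a linear combination of paths with common beginning $\mathrm{out}(l)$ and ending $\mathrm{in}(l)$) together with a vertex $\infty\in Q_0$; $I=Q_0\setminus\{\infty\}$ and $\mathrm{out}(l),\mathrm{in}(l)\in I$ for all $l$. Fix $\alpha\in\mathbb Z_{\ge0}^{Q_0}$ with $\alpha_\infty=1$. Walls are the hyperplanes $(\beta')^\perp=\{\zeta\in\mathbb R^I\mid\sum_i\zeta_i\beta'_i=0\}$ for $\beta'\in\mathbb Z_{\ge0}^I\setminus\{0\}$ with $\beta'_i\le\alpha_i$ for all $i$; chambers are the connected components of the complement of the union of walls. Fix such a $\beta$ and $\bar\zeta\in\beta^\perp$ lying on no wall other than $\beta^\perp$; let $\mathcal C$ be the chamber whose closure contains $\bar\zeta$ and on which $\sum_i\zeta_i\beta_i<0$. Fix $0\in I$ with $\beta_0\neq0$.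 The quiver $Q^\sharp$ has vertices $Q_0\sqcup\{\infty'\}$, arrows $Q_1$ plus one new arrow $\infty'\to0$, and relations $Q_2$. Let $U=\bigoplus_{v\in Q_0\sqcup\{\infty'\}}U_v$ with $\dim U_i=d\beta_i$ ($i\in I$), $U_\infty=0$, $U_{\infty'}=\mathbb C$. Define $\zeta^\sharp$ by $\zeta^\sharp_i=\zeta_i$ ($i\in I$), $\zeta^\sharp_\infty=0$, $\zeta^\sharp_{\infty'}=-\sum_{i\in I}\zeta_i d\beta_i$. A representation of $Q^\sharp$ on $U$ is $\zeta^\sharp$-stable if every sub-representation $S$ (graded subspace stable under all arrow maps) with $0\ne S\ne U$ satisfies $\sum_v\zeta^\sharp_v\dim S_v<0$. It is $\bar\zeta$-semistable if every sub-representation $S$ satisfies $\sum_{i\in I}\bar\zeta_i\dim S_i\le0$. *)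

(* Defs.v *)
From HB Require Import structures.
From mathcomp Require Import all_boot all_order all_algebra.
From mathcomp Require Import complex.
From mathcomp Require Import all_classical all_reals all_analysis.
Import numFieldNormedType.Exports.

Set Implicit Arguments.
Unset Strict Implicit.
Unset Printing Implicit Defensive.

Import Order.TTheory GRing.Theory Num.Theory.
Local Open Scope ring_scope.

(* Linear maps act on row vectors: the map of a is x |-> x *m rho a, so a   *)
(* path [:: a1; a2; ..; ak] (first a1, then a2, ...) is evaluated as        *)
(* rho a1 *m rho a2 *m ... *m rho ak.                                        *)
(* A graded subspace S is given by matrices S v whose row spaces are S_v;   *)
Section QuiverReps.
Variables (K : fieldType) (V A : finType) (src tgt : A -> V) (n : V -> nat).

Definition qrep := forall a : A, 'M[K]_(n (src a), n (tgt a)).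

Fixpoint pend (v : V) (p : seq A) : V :=
  if p is a :: p' then pend (tgt a) p' else v.

Fixpoint is_path (v : V) (p : seq A) : bool :=
  if p is a :: p' then (src a == v) && is_path (tgt a) p' else true.

(* evaluation of a path starting at v (meaningful when is_path v p) *)
Fixpoint peval (rho : qrep) (v : V) (p : seq A) : 'M[K]_(n v, n (pend v p)) :=
  if p is a :: p' return 'M[K]_(n v, n (pend v p)) then
    conform_mx 0 (rho a *m peval rho (tgt a) p')
  else 1%:M.

Record qrel := QRel { rsrc : V; rtgt : V; rterms : seq (K * seq A) }.

Definition qrel_wf (l : qrel) : bool :=
  all (fun t => is_path (rsrc l) t.2 && (pend (rsrc l) t.2 == rtgt l)) (rterms l).

Definition rep_sat (rho : qrep) (l : qrel) : Prop :=
  \sum_(t <- rterms l) t.1 *: (conform_mx 0 (peval rho (rsrc l) t.2)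
                                : 'M[K]_(n (rsrc l), n (rtgt l))) = 0.

Definition subrep (rho : qrep) (S : forall v : V, 'M[K]_(n v)) : Prop :=
  forall a : A, (S (src a) *m rho a <= S (tgt a))%MS.

Definition is_zero_sub (S : forall v : V, 'M[K]_(n v)) : Prop :=
  forall v, S v = 0.

Definition is_full_sub (S : forall v : V, 'M[K]_(n v)) : Prop :=
  forall v, row_full (S v).

End QuiverReps.

(* Framed quivers: Q_0 = option I, with None the framing vertex oo.         *)
Record framed_rel (K : Type) (I A : Type) :=
  FRel { fr_src : I; fr_tgt : I; fr_terms : seq (K * seq A) }.

Definition framed_rel_lift (K : fieldType) (I A : finType) (l : framed_rel K I A)
  : qrel K (option I) A := QRel (Some (fr_src l)) (Some (fr_tgt l)) (fr_terms l).

(* The quiver Q^sharp: vertices option (option I), with None = oo' and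
   Some None = oo; arrows option A, with None the new arrow oo' -> i0.     *)
Section Sharp.
Variables (I A : finType) (src tgt : A -> option I) (i0 : I).

Definition sh_src (a : option A) : option (option I) :=
  if a is Some a' then Some (src a') else None.
Definition sh_tgt (a : option A) : option (option I) :=
  if a is Some a' then Some (tgt a') else Some (Some i0).

Definition sh_path (p : seq A) : seq (option A) := map Some p.

Definition framed_rel_sharp (K : fieldType) (l : framed_rel K I A)
  : qrel K (option (option I)) (option A) :=
  QRel (Some (Some (fr_src l))) (Some (Some (fr_tgt l)))
       (map (fun t => (t.1, sh_path t.2)) (fr_terms l)).
End Sharp.

(* dimension vector of U: dim U_i = d beta_i, U_oo = 0, U_oo' = C *)
Definition dimU (I : finType) (d : nat) (beta : I -> nat) (v : option (option I)) : nat :=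
  match v with
  | None => 1%N
  | Some None => 0%N
  | Some (Some i) => (d * beta i)%N
  end.

Section Walls.
Variables (R : realType) (I : finType).

Definition pairing (z : I -> R) (b : I -> nat) : R := \sum_i z i * (b i)%:R.

Definition wall_vec (alpha : option I -> nat) (b : I -> nat) : Prop :=
  (exists i, b i != 0%N) /\ (forall i, (b i <= alpha (Some i))%N).

Definition wall (b : I -> nat) : set {ptws I -> R} := [set z | pairing z b = 0].

Definition off_walls (alpha : option I -> nat) : set {ptws I -> R} :=
  [set z | forall b, wall_vec alpha b -> ~ wall b z].

Definition is_chamber (alpha : option I -> nat) (C : set {ptws I -> R}) : Prop :=
  exists2 z, off_walls alpha z & C = connected_component (off_walls alpha) z.

Definition chamber_C (alpha : option I -> nat) (beta : I -> nat)
  (zetabar : {ptws I -> R}) (C : set {ptws I -> R}) : Prop :=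
  [/\ is_chamber alpha C, closure C zetabar & forall z, C z -> pairing z beta < 0].

Definition zeta_sharp (d : nat) (beta : I -> nat) (zeta : I -> R)
  (v : option (option I)) : R :=
  match v with
  | None => - \sum_i zeta i * (d * beta i)%:R
  | Some None => 0
  | Some (Some i) => zeta i
  end.
End Walls.

(* Main.v *)
Require Import Defs.
From HB Require Import structures.
From mathcomp Require Import all_boot all_order all_algebra.
From mathcomp Require Import complex.
From mathcomp Require Import all_classical all_reals all_analysis.
Import numFieldNormedType.Exports.
Import Order.TTheory GRing.Theory Num.Theory.
Local Open Scope ring_scope.

Local Open Scope classical_set_scope.
Set Implicit Arguments. Unset Strict Implicit.

Lemma sum_option (T : finType) (M : nmodType) (F : option T -> M) :
  \sum_v F v = F None + \sum_t F (Some t).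
Proof.
rewrite (bigD1 None) //=; congr (_ + _).
rewrite (reindex_omap Some id) //=; last by case.
by apply: eq_bigl => t; rewrite eqxx.
Qed.

Section T1.
Variables (R : realType) (I : finType).

Lemma pairing_cont (b : I -> nat) : continuous (fun z : {ptws I -> R} => pairing z b).
Proof.
move=> z; rewrite /pairing.
have := (@cvg_big R I +%R 0 xpredT (fun x => add_continuous x) _ (nbhs z) (index_enum I) (fun i (x : {ptws I -> R}) => x i * (b i)%:R) (fun i => z i * (b i)%:R) _).
apply => // i _.
apply: cvgMr_tmp.
exact: (@proj_continuous I (fun=> R) i z).
Qed.

Lemma chamber_off alpha (C : set {ptws I -> R}) : is_chamber alpha C ->
  C `<=` off_walls alpha.
Proof. by case=> w _ ->; apply: connected_component_sub. Qed.

Lemma chamber_sign alpha (C : set {ptws I -> R}) b x y :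
  is_chamber alpha C -> wall_vec alpha b -> C x -> C y ->
  pairing x b < 0 -> pairing y b < 0.
Proof.
move=> hC hb Cx Cy hx.
have offy := chamber_off hC Cy.
have /eqP fy0 : pairing y b != 0 by apply/eqP => h; exact: (offy b hb h).
have [//|hy|//] := ltgtP (pairing y b) 0.
have cxy : connected_component (off_walls alpha) x y.
  case: hC Cx Cy => w _ -> Cx Cy.
  apply: connected_component_trans (connected_component_sym Cx) Cy.
case: cxy => D [Dx DO Dc] Dy.
have cf : connected ((fun z : {ptws I -> R} => pairing z b) @` D).
  apply: connected_continuous_connected Dc _.
  apply: continuous_subspaceT => z; exact: pairing_cont.
have /connected_intervalP iv := cf.
have : ((fun z : {ptws I -> R} => pairing z b) @` D) 0.
  apply: (iv (pairing x b) (pairing y b)); [by exists x|by exists y|].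
  by rewrite (ltW hx) (ltW hy).
case=> u Du fu0.
by have := DO u Du b hb fu0.
Qed.

Lemma closure_le (C : set {ptws I -> R}) b zb :
  (forall z, C z -> pairing z b < 0) -> closure C zb -> pairing zb b <= 0.
Proof.
move=> hC cl.
have sub : C `<=` (fun z : {ptws I -> R} => pairing z b) @^-1` [set r | r <= 0].
  by move=> z /hC /ltW.
have clo : closed ((fun z : {ptws I -> R} => pairing z b) @^-1` [set r : R | r <= 0]).
  apply: preimage_closed; last exact: closed_le.
  by move=> z _; apply: pairing_cont.
move/closure_id: clo => clo.
by move: (closureS sub cl); rewrite -clo.
Qed.

Lemma closure_ge (C : set {ptws I -> R}) b zb :
  (forall z, C z -> 0 < pairing z b) -> closure C zb -> 0 <= pairing zb b.
Proof.
move=> hC cl.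
have sub : C `<=` (fun z : {ptws I -> R} => pairing z b) @^-1` [set r | 0 <= r].
  by move=> z /hC /ltW.
have clo : closed ((fun z : {ptws I -> R} => pairing z b) @^-1` [set r : R | 0 <= r]).
  apply: preimage_closed; last exact: closed_ge.
  by move=> z _; apply: pairing_cont.
move/closure_id: clo => clo.
by move: (closureS sub cl); rewrite -clo.
Qed.

Lemma sgn_pos alpha (C : set {ptws I -> R}) b z zb :
  is_chamber alpha C -> wall_vec alpha b -> C z -> closure C zb ->
  0 < pairing zb b -> 0 < pairing z b.
Proof.
move=> hC hb Cz cl hp.
have /eqP f0 : pairing z b != 0.
  by apply/eqP => h; have := chamber_off hC Cz; apply; [exact: hb|exact: h].
have [hn|//|//] := ltgtP (pairing z b) 0.
have := closure_le (fun y Cy => chamber_sign hC hb Cz Cy hn) cl.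
by rewrite leNgt hp.
Qed.

Lemma chamber_sign' alpha (C : set {ptws I -> R}) b x y :
  is_chamber alpha C -> wall_vec alpha b -> C x -> C y ->
  0 < pairing x b -> 0 < pairing y b.
Proof.
move=> hC hb Cx Cy hx.
have /eqP f0 : pairing y b != 0.
  by apply/eqP => h; have := chamber_off hC Cy; apply; [exact: hb|exact: h].
have [hn|//|//] := ltgtP (pairing y b) 0.
have := chamber_sign hC hb Cy Cx hn.
by rewrite ltNge (ltW hx).
Qed.

Lemma sgn_neg alpha (C : set {ptws I -> R}) b z zb :
  is_chamber alpha C -> wall_vec alpha b -> C z -> closure C zb ->
  pairing zb b < 0 -> pairing z b < 0.
Proof.
move=> hC hb Cz cl hp.
have /eqP f0 : pairing z b != 0.
  by apply/eqP => h; have := chamber_off hC Cz; apply; [exact: hb|exact: h].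
have [//|hn|//] := ltgtP (pairing z b) 0.
have := closure_ge (fun y Cy => chamber_sign' hC hb Cz Cy hn) cl.
by rewrite leNgt hp.
Qed.
End T1.

Section T3.
Variables (R : realType) (I : finType).


Definition ev (j : I) : {ptws I -> R} := fun k => if k == j then 1 else 0.

Lemma pairing_ev j c : pairing (ev j) c = (c j)%:R.
Proof.
rewrite /pairing (bigD1 j) //= /ev eqxx mul1r big1 ?addr0 // => k /negbTE ->.
by rewrite mul0r.
Qed.

Lemma pairing_lin (z y : {ptws I -> R}) t c :
  pairing ((fun k => z k - t * y k) : {ptws I -> R}) c = pairing z c - t * pairing y c.
Proof.
rewrite /pairing mulr_sumr -sumrB; apply: eq_bigr => k _.
by rewrite mulrBl mulrA.
Qed.

Lemma wall_neg alpha (beta b : I -> nat) (z : {ptws I -> R}) i0 :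
  beta i0 != 0%N -> wall_vec alpha b -> wall (R:=R) b = wall (R:=R) beta ->
  pairing z beta < 0 -> pairing z b < 0.
Proof.
move=> bi0 [[i bi] _] hw hz.
have key : forall y : {ptws I -> R},
    pairing y b * (beta i0)%:R = pairing y beta * (b i0)%:R.
  move=> y.
  have hb0 : (beta i0)%:R != 0 :> R by rewrite pnatr_eq0.
  pose t := pairing y beta / (beta i0)%:R.
  pose y' : {ptws I -> R} := fun k => y k - t * ev i0 k.
  have h1 : wall beta y'.
    rewrite /wall /= /y' pairing_lin pairing_ev /t.
    by rewrite mulfVK // subrr.
  rewrite -hw /wall /= /y' pairing_lin pairing_ev /t in h1.
  move/eqP: h1; rewrite subr_eq0 => /eqP ->.
  by rewrite mulrAC mulfVK.
have := key (ev i); rewrite !pairing_ev => e.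
have bpos : (0 : R) < (b i)%:R by rewrite ltr0n lt0n.
have b0pos : (0 : R) < (beta i0)%:R by rewrite ltr0n lt0n.
have b0i : (0 : R) < (b i0)%:R.
  rewrite lt_neqAle ler0n andbT; apply/eqP => h0.
  by move: e; rewrite -h0 mulr0 => /eqP; rewrite mulf_eq0 !pnatr_eq0 (negbTE bi) (negbTE bi0).
have := key z.
move: hz b0pos b0i; set p := pairing z b; set q := pairing z beta; set r0 := (beta i0)%:R; set r1 := (b i0)%:R => hz h0 h1 e2.
have : p * r0 < 0 by rewrite e2 pmulr_llt0.
by rewrite pmulr_llt0.
Qed.
End T3.

Section T4.
Variables (R : realType) (I : finType) (d : nat) (beta : I -> nat).
Let K := complex R.
Let M := forall v : option (option I), 'M[K]_(dimU d beta v).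

Lemma rk_None (S : M) : (\rank (S None) <= 1)%N.
Proof. exact: rank_leq_col. Qed.

Lemma rk_oo (S : M) : \rank (S (Some None)) = 0%N.
Proof. by apply/eqP; rewrite -leqn0; exact: rank_leq_col. Qed.

Lemma rk_i (S : M) i : (\rank (S (Some (Some i))) <= d * beta i)%N.
Proof. exact: rank_leq_col. Qed.

Lemma full_char (S : M) : row_full (S None) ->
  (forall i, \rank (S (Some (Some i))) = (d * beta i)%N) -> is_full_sub S.
Proof.
move=> hN hi [[i|]|]; last exact: hN.
  by rewrite /row_full hi.
by rewrite /row_full rk_oo.
Qed.

Lemma zero_char (S : M) : S None = 0 ->
  (forall i, \rank (S (Some (Some i))) = 0%N) -> is_zero_sub S.
Proof.
move=> hN hi [[i|]|]; last exact: hN.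
  by apply/eqP; rewrite -mxrank_eq0 hi.
by apply/eqP; rewrite -mxrank_eq0 rk_oo.
Qed.
End T4.

Unset Implicit Arguments.
Local Close Scope classical_set_scope.

Theorem lemma4p1
  (R : realType)
  (I A : finType) (src tgt : A -> option I)
  (L : Type) (rels : L -> framed_rel (complex R) I A)
  (rels_wf : forall l, qrel_wf src tgt (framed_rel_lift (rels l)))
  (alpha : option I -> nat) (alpha_oo : alpha None = 1%N)
  (beta : I -> nat) (beta_wall : wall_vec alpha beta)
  (zetabar : {ptws I -> R}) (zetabar_beta : pairing zetabar beta = 0)
  (zetabar_gen : forall b, wall_vec alpha b -> wall b zetabar ->
                   wall (R:=R) b = wall (R:=R) beta)
  (C : set {ptws I -> R}) (hC : chamber_C alpha beta zetabar C)
  (i0 : I) (beta_i0 : beta i0 != 0%N)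
  (d : nat) (d_ge1 : (1 <= d)%N)
  (d_beta : forall i, (d * beta i <= alpha (Some i))%N)
  (zeta : {ptws I -> R}) (zeta_C : C zeta)
  (rho : qrep (complex R) (sh_src src) (sh_tgt tgt i0) (dimU d beta))
  (rho_rels : forall l, rep_sat rho (framed_rel_sharp (rels l))) :
  (* zeta^sharp-stable *)
  (forall S, subrep rho S -> ~ is_zero_sub S -> ~ is_full_sub S ->
     \sum_v zeta_sharp d beta zeta v * (\rank (S v))%:R < 0)
  <->
  ((* zetabar-semistable *)
   (forall S, subrep rho S ->
      \sum_i zetabar i * (\rank (S (Some (Some i))))%:R <= 0)
   /\
   (forall S, subrep rho S ->
      \sum_i zetabar i * (\rank (S (Some (Some i))))%:R = 0 ->
      row_full (S None) ->
      is_full_sub S)).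
Proof.
case: hC => hCh hcl hneg.
pose dB := fun i => (d * beta i)%N.
have pdB : forall z : {ptws I -> R}, pairing z dB = d%:R * pairing z beta.
  move=> z; rewrite /pairing mulr_sumr; apply: eq_bigr => i _.
  by rewrite /dB natrM mulrCA.
have wv : forall b : I -> nat, (exists i, b i != 0%N) ->
    (forall i, (b i <= d * beta i)%N) -> wall_vec alpha b.
  move=> b hb hle; split => // i; exact: leq_trans (hle i) (d_beta i).
have P1 : forall b, wall_vec alpha b -> 0 < pairing zetabar b -> 0 < pairing zeta b.
  move=> b hb; exact: sgn_pos hCh hb zeta_C hcl.
have P2 : forall b, wall_vec alpha b -> pairing zetabar b < 0 -> pairing zeta b < 0.
  move=> b hb; exact: sgn_neg hCh hb zeta_C hcl.
have P3 : forall b, wall_vec alpha b -> pairing zetabar b = 0 -> pairing zeta b < 0.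
  move=> b hb h0.
  exact: (wall_neg beta_i0 hb (zetabar_gen b hb h0) (hneg _ zeta_C)).
have Q1 : forall b, wall_vec alpha b -> pairing zeta b < 0 -> pairing zetabar b <= 0.
  move=> b hb h; rewrite leNgt; apply/negP => /(P1 _ hb).
  by rewrite ltNge (ltW h).
have Q2 : forall b, wall_vec alpha b -> 0 < pairing zeta b -> 0 < pairing zetabar b.
  move=> b hb h; have [//|hn|he] := ltgtP 0 (pairing zetabar b).
  - by have := P2 _ hb hn; rewrite ltNge (ltW h).
  - by have := P3 _ hb (esym he); rewrite ltNge (ltW h).
pose bS (S : forall v, 'M[complex R]_(dimU d beta v)) :=
  fun i => \rank (S (Some (Some i))).
pose bC (S : forall v, 'M[complex R]_(dimU d beta v)) :=
  fun i => (d * beta i - bS S i)%N.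
have pbC : forall S (z : {ptws I -> R}), pairing z (bC S) = pairing z dB - pairing z (bS S).
  move=> S z; rewrite /pairing -sumrB; apply: eq_bigr => i _.
  rewrite /bC natrB ?mulrBr //; exact: rk_i.
have Fexp : forall S : (forall v, 'M[complex R]_(dimU d beta v)),
   \sum_v zeta_sharp d beta zeta v * (\rank (S v))%:R =
   pairing zeta (bS S) - (\rank (S None))%:R * pairing zeta dB.
  move=> S; rewrite !sum_option /= mul0r add0r.
  by rewrite mulNr addrC mulrC.
split.
- move=> Hst; split.
  + move=> S hS; change (pairing zetabar (bS S) <= 0).
    have [[i hi]|h0] := pselect (exists i, bS S i != 0%N); last first.
      rewrite /pairing big1 // => i _.
      case: (eqVneq (bS S i) 0%N) => [->|hne]; first by rewrite mulr0.
      by case: h0; exists i.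
    pose S' : forall v, 'M[complex R]_(dimU d beta v) := fun v =>
      match v as v0 return 'M[complex R]_(dimU d beta v0) with
      | None => 0
      | Some w => S (Some w)
      end.
    have hS' : subrep rho S'.
      move=> [a|] /=; first exact: (hS (Some a)).
      by rewrite mul0mx sub0mx.
    have := Hst S' hS' _ _.
    rewrite Fexp /= mxrank0 mulr0n mul0r subr0 => h.
    apply: Q1 (h _ _).
    * exact: wv (ex_intro _ i hi) (rk_i S).
    * move=> hz; move: hi; rewrite /bS.
      by have := hz (Some (Some i)) => /= ->; rewrite mxrank0.
    * by move=> hf; have := hf None; rewrite /row_full /= mxrank0.
  + move=> S hS h0 hfN; change (pairing zetabar (bS S) = 0) in h0.
    have [/forallP hall | /forallPn [i hi]] := boolP [forall i, bS S i == (d * beta i)%N].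
      by apply: full_char hfN _ => i; apply/eqP/hall.
    exfalso.
    have rN : \rank (S None) = 1%N by apply/eqP; exact: hfN.
    have nz : ~ is_zero_sub S.
      by move=> hz; move: rN; rewrite (hz None) mxrank0.
    have nf : ~ is_full_sub S.
      move=> hf; move: hi; rewrite /bS.
      by have := hf (Some (Some i)); rewrite /row_full => /eqP ->; rewrite eqxx.
    have := Hst S hS nz nf.
    rewrite Fexp rN mulr1n mul1r -opprB -pbC oppr_lt0 => h.
    have hw : wall_vec alpha (bC S).
      apply: wv; last by move=> j; rewrite /bC leq_subr.
      exists i; rewrite /bC subn_eq0 -ltnNge ltn_neqAle rk_i andbT.
      exact: hi.
    by have := Q2 _ hw h; rewrite pbC pdB zetabar_beta mulr0 h0 subrr ltxx.
- case=> Hss Hc S hS hnz hnf.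
  rewrite Fexp.
  have := rk_None S; case rN: (\rank (S None)) => [|[|m]] // _.
  + rewrite mulr0n mul0r subr0.
    have hSN : S None = 0 by apply/eqP; rewrite -mxrank_eq0 rN.
    have [[i hi]|h0] := pselect (exists i, bS S i != 0%N); last first.
      exfalso; apply: hnz; apply: zero_char hSN _ => i.
      case: (eqVneq (bS S i) 0%N) => // hne.
      by case: h0; exists i.
    have hw := wv (bS S) (ex_intro _ i hi) (rk_i S).
    have := Hss S hS.
    change (pairing zetabar (bS S) <= 0 -> pairing zeta (bS S) < 0).
    by rewrite le_eqVlt => /orP [/eqP h|h]; [exact: P3 | exact: P2].
  + rewrite mulr1n mul1r -opprB -pbC oppr_lt0.
    have hfN : row_full (S None) by rewrite /row_full rN.
    have [/forallP hall | /forallPn [i hi]] := boolP [forall i, bS S i == (d * beta i)%N].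
      by exfalso; apply: hnf; apply: full_char hfN _ => i; apply/eqP/hall.
    have hw : wall_vec alpha (bC S).
      apply: wv; last by move=> j; rewrite /bC leq_subr.
      exists i; rewrite /bC subn_eq0 -ltnNge ltn_neqAle rk_i andbT.
      exact: hi.
    apply: P1 hw _; rewrite pbC pdB zetabar_beta mulr0 sub0r oppr_gt0.
    have := Hss S hS.
    change (pairing zetabar (bS S) <= 0 -> pairing zetabar (bS S) < 0).
    rewrite le_eqVlt => /orP [/eqP h|//].
    by exfalso; apply: hnf; exact: Hc S hS h hfN.
Qed.
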